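(* Let $\mathcal I\subseteq\mathcal P(\mathbb R)$ be a proper, translation-invariant $\sigma$-ideal containing all singletons and having a Borel base, and assume that $\mathcal I$ has the Steinhaus property and $\operatorname{non}(\mathcal I)<\mathfrak c$. Then there exists a set $C\subseteq\mathbb R$ which is a ${<}\mathfrak c$-covering and is completely $\mathcal I$-nonmeasurable.
   Context: $\mathfrak c=|\mathbb R|$. Borel base: every $A\in\mathcal I$ is contained in a Borel set in $\mathcal I$. $\operatorname{non}(\mathcal I)=\min\{|A|:A\subseteq\mathbb R,\ A\notin\mathcal I\}$. Steinhaus property: for all Borel $A,B\notin\mathcal I$ there is a nonempty open $U\subseteq A-B$. A set $N$ is completely $\mathcal I$-nonmeasurable if for every Borel $A\notin\mathcal I$, both $A\cap N\notin\mathcal I$ and $A\setminus N\notin\mathcal I$. A set $C$ is a ${<}\mathfrak c$-covering if for every $B\subseteq\mathbb R$ with $|B|<\mathfrak c$ there is $x\in\mathbb R$ with $B+x\subseteq C$. *)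

(* Defs.v *)
From mathcomp Require Import all_boot all_order all_algebra.
From mathcomp Require Import all_classical all_reals all_analysis.
Import Order.TTheory GRing.Theory Num.Theory numFieldNormedType.Exports.
Local Open Scope classical_set_scope.
Local Open Scope ring_scope.

Set Implicit Arguments.
Unset Strict Implicit.
Section Defs.
Variable R : realType.

Definition Borel (A : set R) : Prop := <<s [set U : set R | open U] >> A.

Definition translate (A : set R) (x : R) : set R := [set a + x | a in A].

Definition setdiff_alg (A B : set R) : set R := [set a - b | a in A & b in B].

Definition sigma_ideal (I : set (set R)) : Prop :=
  I set0 /\
  (forall A B : set R, A `<=` B -> I B -> I A) /\
  (forall F : nat -> set R, (forall n, I (F n)) -> I (\bigcup_n F n)).

Definition proper_sigma_ideal (I : set (set R)) : Prop := ~ I [set: R].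

Definition translation_invariant (I : set (set R)) : Prop :=
  forall (A : set R) (x : R), I A -> I (translate A x).

Definition contains_singletons (I : set (set R)) : Prop :=
  forall x : R, I [set x].

Definition has_Borel_base (I : set (set R)) : Prop :=
  forall A : set R, I A -> exists B : set R, [/\ Borel B, I B & A `<=` B].

Definition card_lt_c (A : set R) : Prop :=
  (A #<= [set: R])%card /\ ~ ([set: R] #<= A)%card.

Definition non_lt_c (I : set (set R)) : Prop :=
  exists A : set R, card_lt_c A /\ ~ I A.

Definition Steinhaus (I : set (set R)) : Prop :=
  forall A B : set R, Borel A -> Borel B -> ~ I A -> ~ I B ->
    exists U : set R, [/\ open U, U !=set0 & U `<=` setdiff_alg A B].

Definition completely_nonmeasurable (I : set (set R)) (N : set R) : Prop :=
  forall A : set R, Borel A -> ~ I A -> ~ I (A `&` N) /\ ~ I (A `\` N).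

Definition lt_c_covering (C : set R) : Prop :=
  forall B : set R, card_lt_c B -> exists x : R, translate B x `<=` C.

End Defs.

(* Main.v *)
Require Import Defs.
From mathcomp Require Import all_boot all_order all_algebra.
From mathcomp Require Import all_classical all_reals all_analysis.
From mathcomp Require Import ring.
Import Order.TTheory GRing.Theory Num.Theory numFieldNormedType.Exports.
Local Open Scope classical_set_scope.
Local Open Scope ring_scope.
Set Implicit Arguments.
Unset Strict Implicit.
Unset Printing Implicit Defensive.

Definition cle {T U} (A : set T) (B : set U) :=
  exists f : T -> U, (forall x, A x -> B (f x)) /\
    (forall x y, A x -> A y -> f x = f y -> x = y).

Lemma cle_refl T (A : set T) : cle A A.
Proof. by exists id. Qed.

Lemma cle_trans T U V (A : set T) (B : set U) (C : set V) :
  cle A B -> cle B C -> cle A C.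
Proof.
move=> [f [fAB fi]] [g [gBC gi]]; exists (g \o f); split=> [x Ax|x y Ax Ay /= e].
  exact/gBC/fAB.
by apply: fi => //; apply: gi => //; exact: fAB.
Qed.

Lemma cle_sub T (A B : set T) : A `<=` B -> cle A B.
Proof. by move=> AB; exists id; split=> // x /AB. Qed.

Lemma cle_surj {T : pointedType} U (A : set T) (B : set U) (f : T -> U) :
  (forall y, B y -> exists2 x, A x & f x = y) -> cle B A.
Proof.
move=> fs.
have /choice[g gP] : forall y, exists x : T, B y -> A x /\ f x = y.
  move=> y; have [By|NBy] := EM (B y).
    by have [x Ax fx] := fs y By; exists x.
  by exists point.
exists g; split=> [y By|y y' By By' e]; first by case: (gP y By).
by rewrite -(gP y By).2 -(gP y' By').2 e.
Qed.

Lemma cle_image {T : pointedType} U (A : set T) (f : T -> U) : cle (f @` A) A.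
Proof. by apply: (@cle_surj _ _ _ _ f) => y [x Ax <-]; exists x. Qed.

Lemma cle_total {T U : pointedType} (X : set T) (Y : set U) : cle X Y \/ cle Y X.
Proof.
pose P := [set G : set (T * U) | G `<=` X `*` Y /\
  (forall x y y', G (x, y) -> G (x, y') -> y = y') /\
  (forall x x' y, G (x, y) -> G (x', y) -> x = x')].
have [M [[MXY [Mf Mi]] maxM]] : exists M, P M /\ forall B, M `<` B -> ~ P B.
  apply: Zorn_bigcup => F FP Ftot; split; [|split].
  - by move=> [x y] [G FG Gxy]; exact: (FP G FG).1 _ Gxy.
  - move=> x y y' [G FG Gxy] [G' FG' Gxy'].
    case: (Ftot G G' FG FG') => sub.
      by apply: ((FP G' FG').2.1 x) => //; apply: sub.
    by apply: ((FP G FG).2.1 x) => //; apply: sub.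
  - move=> x x' y [G FG Gxy] [G' FG' Gxy'].
    case: (Ftot G G' FG FG') => sub.
      by apply: ((FP G' FG').2.2 x x' y) => //; apply: sub.
    by apply: ((FP G FG).2.2 x x' y) => //; apply: sub.
have [Xdom|] := EM (forall x, X x -> exists y, M (x, y)).
  left; have /choice[f fP] : forall x, exists y : U, X x -> M (x, y).
    move=> x; have [Xx|NXx] := EM (X x); first by have [y ?] := Xdom x Xx; exists y.
    by exists point.
  exists f; split=> [x Xx|x x' Xx Xx' e]; first exact: (MXY _ (fP x Xx)).2.
  by apply: (Mi x x' (f x)); [exact: fP|rewrite e; exact: fP].
move=> /existsNP[x0 /not_implyP[Xx0 Nx0]].
have [Yran|] := EM (forall y, Y y -> exists x, M (x, y)).
  right; have /choice[f fP] : forall y, exists x : T, Y y -> M (x, y).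
    move=> y; have [Yy|NYy] := EM (Y y); first by have [x ?] := Yran y Yy; exists x.
    by exists point.
  exists f; split=> [y Yy|y y' Yy Yy' e]; first exact: (MXY _ (fP y Yy)).1.
  by apply: (Mf (f y) y y'); [exact: fP|rewrite e; exact: fP].
move=> /existsNP[y0 /not_implyP[Yy0 Ny0]].
exfalso; apply: (maxM (M `|` [set (x0, y0)])).
  split; first by move=> z Mz; left.
  by move=> /(_ (x0, y0) (or_intror erefl)) Mxy; apply: Nx0; exists y0.
split; [|split].
- by move=> z [/MXY//|->].
- move=> x y y' [Mxy|/pair_equal_spec [ex ey]] [Mxy'|/pair_equal_spec [ex' ey']].
  + exact: Mf Mxy Mxy'.
  + by exfalso; apply: Nx0; exists y; rewrite -ex'.
  + by exfalso; apply: Nx0; exists y'; rewrite -ex.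
  + by rewrite ey ey'.
- move=> x x' y [Mxy|/pair_equal_spec [ex ey]] [Mxy'|/pair_equal_spec [ex' ey']].
  + exact: Mi Mxy Mxy'.
  + by exfalso; apply: Ny0; exists x; rewrite -ey'.
  + by exfalso; apply: Ny0; exists x'; rewrite -ey.
  + by rewrite ex ex'.
Qed.
Lemma cle_card T (U : pointedType) (A : set T) (B : set U) :
  cle A B <-> (A #<= B)%card.
Proof.
split.
  move=> [f [fAB fi]]; apply/pcard_leP/injfunPex; exists f => // x y.
  by rewrite !inE; exact: fi.
move=> /pcard_leP/injfunPex[f fAB fi]; exists f; split => // x y Ax Ay.
by apply: fi; rewrite inE.
Qed.

Lemma cle_bij (T U : pointedType) (A : set T) (B : set U) :
  cle A B -> cle B A -> exists f, set_bij A B f.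
Proof.
move=> /(cle_card) AB /(cle_card) BA.
by have /pcard_eqP/bijPex := Cantor_Bernstein AB BA.
Qed.

Section Hess.
Variable T : pointedType.
Implicit Types (G M : set ((T * T) * T)).

Definition ran G c := exists k, G (k, c).

Definition pgraph (A : set T) G :=
 [/\ forall a b c, G ((a,b),c) -> [/\ A c, ran G a & ran G b],
     forall k c c', G (k,c) -> G (k,c') -> c = c',
     forall k k' c, G (k,c) -> G (k',c) -> k = k' &
     forall a b, ran G a -> ran G b -> exists c, G ((a,b),c)].

Lemma pgraph_chain A (F : set (set ((T*T)*T))) :
  F `<=` pgraph A -> total_on F subset -> pgraph A (\bigcup_(G in F) G).
Proof.
move=> FP Ftot; split.
- move=> a b c [G FG Gabc]; have [h1 _ _ _] := FP G FG.
  have [Ac [k Gk] [k' Gk']] := h1 a b c Gabc.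
  by split => //; [exists k; exists G | exists k'; exists G].
- move=> k c c' [G FG Gc] [G' FG' Gc'].
  case: (Ftot G G' FG FG') => sub.
    by have [_ h _ _] := FP G' FG'; apply: h (sub _ Gc) Gc'.
  by have [_ h _ _] := FP G FG; apply: h Gc (sub _ Gc').
- move=> k k' c [G FG Gc] [G' FG' Gc'].
  case: (Ftot G G' FG FG') => sub.
    by have [_ _ h _] := FP G' FG'; apply: h (sub _ Gc) Gc'.
  by have [_ _ h _] := FP G FG; apply: h Gc (sub _ Gc').
- move=> a b [k [G FG Gk]] [k' [G' FG' Gk']].
  case: (Ftot G G' FG FG') => sub.
    have [_ _ _ h] := FP G' FG'.
    have [c Gc] := h a b (ex_intro _ k (sub _ Gk)) (ex_intro _ k' Gk').
    by exists c; exists G'.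
  have [_ _ _ h] := FP G FG.
  have [c Gc] := h a b (ex_intro _ k Gk) (ex_intro _ k' (sub _ Gk')).
  by exists c; exists G.
Qed.

Lemma pgraph_fun A G : pgraph A G ->
  exists m : T -> T -> T, (forall a b, ran G a -> ran G b -> G ((a,b), m a b)).
Proof.
move=> [_ _ _ h].
have /choice[m mP] : forall k : T * T, exists c, ran G k.1 -> ran G k.2 -> G (k, c).
  move=> [a b]; have [ra|nra] := EM (ran G a); last by exists point.
  have [rb|nrb] := EM (ran G b); last by exists point.
  by have [c ?] := h a b ra rb; exists c.
by exists (fun a b => m (a, b)) => a b ra rb; exact: (mP (a,b)).
Qed.


Lemma pgraph_ext A M s0 s1 s2 (h : T -> T) :
  pgraph A M -> ran M s0 -> ran M s1 -> ran M s2 ->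
  s0 <> s1 -> s0 <> s2 -> s1 <> s2 ->
  (forall x, ran M x -> A (h x) /\ ~ ran M (h x)) ->
  (forall x y, ran M x -> ran M y -> h x = h y -> x = y) ->
  exists M', pgraph A M' /\ M `<` M'.
Proof.
move=> pM r0 r1 r2 d01 d02 d12 hS hi.
set S := ran M.
have [m mP] := pgraph_fun pM.
have [pM1 pM2 pM3 pM4] := pM.
have mS a b : S a -> S b -> S (m a b) by move=> Sa Sb; exists (a, b); exact: mP.
have mi a b a' b' : S a -> S b -> S a' -> S b' -> m a b = m a' b' -> a = a' /\ b = b'.
  move=> Sa Sb Sa' Sb' e.
  have := pM3 (a, b) (a', b') (m a b) (mP a b Sa Sb).
  rewrite e => /(_ (mP a' b' Sa' Sb')) [-> ->]; done.
have keyS k c : M (k, c) -> S k.1 /\ S k.2.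
  by case: k => a b /pM1 [].
have valS k c : M (k, c) -> S c by move=> Mkc; exists k.
set Tp := h @` S.
have TpA x : Tp x -> A x /\ ~ S x by move=> [y Sy <-]; exact: hS.
have /choice[hv hvP] : forall t, exists s, Tp t -> S s /\ h s = t.
  move=> t; have [[s Ss <-]|nT] := EM (Tp t); first by exists s.
  by exists point.
pose sg x := if `[< S x >] then x else hv x.
have sgS x : S x \/ Tp x -> S (sg x).
  rewrite /sg; case: ifPn => [/asboolP//|/asboolP nS] [//|/hvP[]//].
have sg_rec x y : S x \/ Tp x -> S y \/ Tp y -> (S x <-> S y) -> sg x = sg y -> x = y.
  rewrite /sg => Hx Hy [SxSy SySx].
  have [Sx|nSx] := EM (S x).
    by rewrite asboolT // asboolT //; exact: SxSy.
  have nSy : ~ S y by move=> /SySx.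
  rewrite asboolF // asboolF // => e.
  have Tx : Tp x by case: Hx.
  have Ty : Tp y by case: Hy.
  by rewrite -(hvP x Tx).2 -(hvP y Ty).2 e.
pose tag (q : T * T) := if `[< S q.1 >] then s0 else if `[< S q.2 >] then s1 else s2.
pose E := [set q : T * T | [/\ S q.1 \/ Tp q.1, S q.2 \/ Tp q.2 & ~ (S q.1 /\ S q.2)]].
have tagS q : S (tag q).
  by rewrite /tag; case: ifP => _ //; case: ifP.
have tag_rec q q' : E q -> E q' -> tag q = tag q' ->
    (S q.1 <-> S q'.1) /\ (S q.2 <-> S q'.2).
  case: q q' => [a b] [a' b'] [_ _ nab] [_ _ nab'] /=; rewrite /tag /=.
  have [Sa|nSa] := EM (S a); have [Sa'|nSa'] := EM (S a');
  rewrite ?(asboolT Sa) ?(asboolT Sa') ?(asboolF nSa) ?(asboolF nSa') /=.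
  - move=> _; split; first by split.
    by split => Sb; [exfalso; apply: nab | exfalso; apply: nab'].
  - have [Sb'|nSb'] := EM (S b'); rewrite ?(asboolT Sb') ?(asboolF nSb') //.
  - have [Sb|nSb] := EM (S b); rewrite ?(asboolT Sb) ?(asboolF nSb).
      by move=> e; exfalso; apply: d01.
    by move=> e; exfalso; apply: d02.
  - have [Sb|nSb] := EM (S b); have [Sb'|nSb'] := EM (S b');
    rewrite ?(asboolT Sb) ?(asboolF nSb) ?(asboolT Sb') ?(asboolF nSb') //;
    by move=> e; first [exfalso; by auto | split; split; intros; solve [contradiction | assumption]].
pose psi (q : T * T) := h (m (m (sg q.1) (sg q.2)) (tag q)).
have ET : cle E Tp.
  exists psi; split.
    move=> [a b] [Ha Hb _]; exists (m (m (sg a) (sg b)) (tag (a, b))) => //.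
    by apply: (mS) => //; apply: (mS); exact: sgS.
  move=> [a b] [a' b'] Eq Eq' e.
  have [Ha Hb _] := Eq; have [Ha' Hb' _] := Eq'.
  have Ssa := sgS _ Ha; have Ssb := sgS _ Hb.
  have Ssa' := sgS _ Ha'; have Ssb' := sgS _ Hb'.
  have Sm := mS _ _ Ssa Ssb; have Sm' := mS _ _ Ssa' Ssb'.
  have e1 := hi _ _ (mS _ _ Sm (tagS (a, b))) (mS _ _ Sm' (tagS (a', b'))) e.
  have [e2 etag] := mi _ _ _ _ Sm (tagS _) Sm' (tagS _) e1.
  have [ea eb] := mi _ _ _ _ Ssa Ssb Ssa' Ssb' e2.
  have [ia ib] := tag_rec _ _ Eq Eq' etag.
  by rewrite (sg_rec a a' Ha Ha' ia ea) (sg_rec b b' Hb Hb' ib eb).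
have TE : cle Tp E.
  exists (fun t => (t, t)); split => [t Tt|t t' _ _ [] //].
  by split => /=; [right|right|move=> [/(TpA _ Tt).2]].
have [k [kf ki ks]] := cle_bij ET TE.
pose M' := M `|` [set z | E z.1 /\ z.2 = k z.1].
have ranM' x : ran M' x <-> S x \/ Tp x.
  split.
    move=> [q [Mq|[Eq /= ->]]]; first by left; exists q.
    by right; apply: kf.
  move=> [[q Mq]|Tx]; first by exists q; left.
  by have [q Eq <-] := ks x Tx; exists q; right.
exists M'; split.
  split.
  - move=> a b c [/pM1 [Ac ra rb]|[Eq /= ->]].
      by split => //; apply/ranM'; left.
    have [Ha Hb _] := Eq.
    by split; [exact: (TpA _ (kf _ Eq)).1|apply/ranM'|apply/ranM'].
  - move=> q c c' [Mc|[Eq /= ->]] [Mc'|[Eq' /= ->]] //.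
    + exact: pM2 Mc Mc'.
    + by have [_ _] := Eq'; have := keyS _ _ Mc.
    + by have [_ _] := Eq; have := keyS _ _ Mc'.
  - move=> q q' c [Mc|[Eq /= ec]] [Mc'|[Eq' /= ec']].
    + exact: pM3 Mc Mc'.
    + by exfalso; have := (TpA _ (kf _ Eq')).2; rewrite -ec'; apply; exact: valS Mc.
    + by exfalso; have := (TpA _ (kf _ Eq)).2; rewrite -ec; apply; exact: valS Mc'.
    + by apply: ki; rewrite ?inE // -ec -ec'.
  - move=> a b /ranM' Ha /ranM' Hb.
    have [[Sa Sb]|nab] := EM (S a /\ S b).
      by exists (m a b); left; apply: mP.
    by exists (k (a, b)); right.
split; first by move=> z Mz; left.
have Ts0 : Tp (h s0) by exists s0.
have Eq0 : E (h s0, h s0).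
  by split => /=; [right|right|move=> [/(TpA _ Ts0).2]].
move=> /(_ ((h s0, h s0), k (h s0, h s0))) sub.
have /keyS [/= /(TpA _ Ts0).2 //] := sub (or_intror (conj Eq0 erefl)).
Qed.

Lemma pairing : exists p : nat * nat -> nat, set_bij [set: nat * nat] [set: nat] p.
Proof. by have /pcard_eqP/bijPex := card_nat2. Qed.

Lemma hessenberg (A : set T) : cle [set: nat] A -> cle (A `*` A) A.
Proof.
move=> [e [eA ei]].
have ei' i j : e i = e j -> i = j by move=> /ei; apply.
have [p [_ pi ps]] := pairing.
pose G0 : set ((T * T) * T) := [set z | exists i j, z = ((e i, e j), e (p (i, j)))].
have rG0 n : ran G0 (e n).
  have [[i j] _ pij] := ps n I.
  by exists (e i, e j); exists i, j; rewrite pij.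
have rG0e a : ran G0 a -> exists n, a = e n.
  by move=> [k [i [j [_ ->]]]]; exists (p (i, j)).
have pG0 : pgraph A G0.
  split.
  - move=> a b c [i [j /pair_equal_spec [/pair_equal_spec [-> ->] ->]]].
    split; [exact: eA|exact: rG0|exact: rG0].
  - move=> k c c' [i [j /pair_equal_spec [-> ->]]] [i' [j' /pair_equal_spec [/pair_equal_spec [/ei' <- /ei' <-] ->]]].
    done.
  - move=> k k' c [i [j /pair_equal_spec [-> ->]]] [i' [j' /pair_equal_spec [-> /ei' /pi]]].
    by rewrite !inE => /(_ I I) [-> ->].
  - move=> a b /rG0e [n ->] /rG0e [n' ->].
    by exists (e (p (n, n'))); exists n, n'.
pose P := [set G | pgraph A G /\ (G = set0 \/ G0 `<=` G)].
have [M [[pM M0] maxM]] : exists M, P M /\ forall B, M `<` B -> ~ P B.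
  apply: Zorn_bigcup => F FP Ftot; split.
    by apply: pgraph_chain => // G /FP [].
  have [[G [FG GG0]]|nG] := EM (exists G, F G /\ G0 `<=` G).
    by right; move=> z G0z; exists G => //; exact: GG0.
  left; apply/seteqP; split => // z [G FG Gz].
  have [_ [G0E|GG0]] := FP G FG; first by rewrite G0E in Gz.
  by exfalso; apply: nG; exists G.
have G0M : G0 `<=` M.
  case: M0 => // M0; exfalso; apply: (maxM G0); last by split => //; right.
  rewrite M0; split => // /(_ ((e 0, e 0), e (p (0, 0)))%N) => H.
  by have := H (ex_intro _ 0%N (ex_intro _ 0%N erefl)).
pose S := ran M.
have G0S n : S (e n).
  by have [k G0k] := rG0 n; exists k; apply: G0M.
have [pM1 pM2 pM3 pM4] := pM.
have SA x : S x -> A x by move=> [[a b] /pM1 []].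
have [m mP] := pgraph_fun pM.
have mS a b : S a -> S b -> S (m a b) by move=> Sa Sb; exists (a, b); exact: mP.
have mi a b a' b' : S a -> S b -> S a' -> S b' -> m a b = m a' b' -> a = a' /\ b = b'.
  move=> Sa Sb Sa' Sb' em.
  have := pM3 (a, b) (a', b') (m a b) (mP a b Sa Sb).
  rewrite em => /(_ (mP a' b' Sa' Sb')) [-> ->]; done.
have d01 : e 0%N <> e 1%N by move=> /ei'.
have d02 : e 0%N <> e 2%N by move=> /ei'.
have d12 : e 1%N <> e 2%N by move=> /ei'.
have [[h [hS hi]]|[g [gS gi]]] := cle_total S (A `\` S).
  have [M' [pM' MM']] := pgraph_ext pM (G0S 0%N) (G0S 1%N) (G0S 2%N) d01 d02 d12
    (fun x Sx => hS x Sx) hi.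
  exfalso; apply: (maxM M') => //; split => //; right.
  by move=> z /G0M; apply: MM'.1.
pose f a := if `[< S a >] then m a (e 0%N) else m (g a) (e 1%N).
have fS a : A a -> S (f a).
  rewrite /f => Aa; case: ifPn => [/asboolP Sa|/asboolP nSa]; apply: (mS) => //.
  exact: gS.
have fi a b : A a -> A b -> f a = f b -> a = b.
  rewrite /f => Aa Ab.
  case: ifPn => [/asboolP Sa|/asboolP nSa]; case: ifPn => [/asboolP Sb|/asboolP nSb].
  - by move=> /(mi _ _ _ _ Sa (G0S 0%N) Sb (G0S 0%N)) [].
  - by move=> /(mi _ _ _ _ Sa (G0S 0%N) (gS b (conj Ab nSb)) (G0S 1%N)) [_ /d01].
  - by move=> /(mi _ _ _ _ (gS a (conj Aa nSa)) (G0S 1%N) Sb (G0S 0%N)) [_ /esym /d01].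
  - by move=> /(mi _ _ _ _ (gS a (conj Aa nSa)) (G0S 1%N) (gS b (conj Ab nSb)) (G0S 1%N)) [/(gi _ _ (conj Aa nSa) (conj Ab nSb))].
exists (fun q => m (f q.1) (f q.2)); split.
  by move=> [a b] [/= Aa Ab]; apply/SA/mS; exact: fS.
move=> [a b] [a' b'] [/= Aa Ab] [/= Aa' Ab'].
move=> /(mi _ _ _ _ (fS a Aa) (fS b Ab) (fS a' Aa') (fS b' Ab')) [].
by move=> /(fi _ _ Aa Aa') -> /(fi _ _ Ab Ab') ->.
Qed.

End Hess.

Section Main.
Variable R : realType.

Lemma Borel_preimage (f : R -> R) : continuous f ->
  forall A, Borel A -> Borel (f @^-1` A).
Proof.
move=> fc.
suff : [set A : set R | Borel A] `<=` [set A | Borel (f @^-1` A)] by move=> H A /H.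
apply: smallest_sub.
  split.
  - by rewrite /= preimage_set0; exact: sigma_algebra0.
  - move=> A /= BA; rewrite setTD -preimage_setC -setTD.
    exact: sigma_algebraCD.
  - move=> F BF /=; rewrite preimage_bigcup.
    exact: sigma_algebra_bigcup.
move=> U /= oU; apply: sub_sigma_algebra => /=.
by apply: open_comp => // x _; exact: fc.
Qed.

Lemma translateE (A : set R) (x : R) : translate A x = (fun y => y - x) @^-1` A.
Proof.
apply/seteqP; split => [y [a Aa <-]|y /= Ay]; first by rewrite /= addrK.
by exists (y - x) => //; rewrite subrK.
Qed.

Lemma Borel_translate (A : set R) x : Borel A -> Borel (translate A x).
Proof.
rewrite translateE; apply: Borel_preimage => y.
apply: cvgB; [exact: cvg_id|exact: cvg_cst].
Qed.

Lemma nat_R : cle [set: nat] [set: R].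
Proof.
exists (fun n : nat => n%:R); split => // m n _ _ /eqP.
by rewrite eqr_nat => /eqP.
Qed.

Lemma ratrB (p q : rat) : ratr (p - q) = ratr p - ratr q :> R.
Proof. by rewrite rmorphB. Qed.

Definition small (B : set R) := ~ cle [set: R] B.

Lemma small_union (A B : set R) : small A -> small B -> small (A `|` B).
Proof.
move=> sA sB [f [fAB fi]].
have [F [_ Fi]] := hessenberg nat_R.
pose phi (x y : R) := f (F (x, y)).
have phiAB x y : A (phi x y) \/ B (phi x y) by apply: fAB.
have phii x y x' y' : phi x y = phi x' y' -> x = x' /\ y = y'.
  by move=> /fi => /(_ I I) /Fi => /(_ (conj I I) (conj I I)) [-> ->].
have [[x Hx]|nx] := EM (exists x, forall y, ~ A (phi x y)).
  apply: sB; exists (phi x); split => [y _|y y' _ _ /phii [] //].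
  by case: (phiAB x y) => // /Hx.
have /choice[yf yfP] : forall x, exists y, A (phi x y).
  move=> x; apply: contra_notP nx => H; exists x => y Ay; apply: H; by exists y.
apply: sA; exists (fun x => phi x (yf x)); split => [x _|x x' _ _ /phii []//].
exact: yfP.
Qed.

Lemma small_prod (W : set R) (A B : set R) (g : R * R -> R) :
  cle [set: nat] W -> small W -> small A -> small B -> small (g @` (A `*` B)).
Proof.
move=> nW sW sA sB cI.
pose S := A `|` B `|` W.
have sS : small S by apply: small_union => //; exact: small_union.
have nS : cle [set: nat] S by apply: cle_trans nW _; apply: cle_sub => x Wx; right.
have := hessenberg nS => HS.
apply: sS; apply: cle_trans cI _; apply: cle_trans (cle_image _ _) _.
apply: cle_trans HS; apply: cle_sub => -[a b] [/= Aa Bb]; split => /=.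
  by left; left.
by left; right.
Qed.

Lemma small_ne (Z : set R) : small Z -> exists t, ~ Z t.
Proof.
move=> sZ; apply: contra_notP sZ => H; apply: cle_sub => t _.
by apply: contra_notP H => nZ; exists t.
Qed.

Lemma small_image (Y : set R) (f : R -> R) : small Y -> small (f @` Y).
Proof. by move=> sY cI; apply: sY; apply: cle_trans cI (cle_image _ _). Qed.

Lemma small_sub (Y Z : set R) : Y `<=` Z -> small Z -> small Y.
Proof. by move=> YZ sZ cI; apply: sZ; apply: cle_trans cI (cle_sub YZ). Qed.

Lemma rat_union (P : rat -> set R) :
  [set x | exists q, P q x] =
  \bigcup_n (match unpickle n with Some q => P q | None => set0 end).
Proof.
apply/seteqP; split => [x [q Pqx]|x [n _]].
  by exists (pickle q); [|rewrite pickleK].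
by case: (unpickle n) => // q Pqx; exists q.
Qed.

Lemma nat_rat : cle (ratr @` [set: rat] : set R) [set: nat].
Proof.
pose f (n : nat) : R := if unpickle n is Some q then ratr q else 0.
apply: (@cle_surj _ _ _ _ f) => y [q _ <-].
by exists (pickle q); [|rewrite /f pickleK].
Qed.

Theorem main_proof (I : set (set R)) :
  sigma_ideal I -> proper_sigma_ideal I -> translation_invariant I ->
  contains_singletons I -> has_Borel_base I -> Steinhaus I -> non_lt_c I ->
  exists C : set R, lt_c_covering C /\ completely_nonmeasurable I C.
Proof.
move=> [I0 [Imono Iun]] _ Itr Isg _ Ist [X [[_ sX0] nIX]].
have sX : small X by move=> /cle_card.
have Iunion2 A B : I A -> I B -> I (A `|` B).
  move=> IA IB; pose F (n : nat) := if n == 0%N then A else B.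
  have : I (\bigcup_n F n) by apply: Iun => n; rewrite /F; case: ifP.
  apply: Imono => x [Ax|Bx]; first by exists 0%N.
  by exists 1%N.
have Irat (P : rat -> set R) : (forall q, I (P q)) -> I [set x | exists q, P q x].
  move=> IP; rewrite rat_union; apply: Iun => n.
  by case: (unpickle n).
have nX : cle [set: nat] X.
  apply/cle_card/infiniteP => fX; apply: nIX.
  have /cle_card [f [_ fi]] := finite_set_countable fX.
  pose F (n : nat) := [set x | X x /\ f x = n].
  have : I (\bigcup_n F n).
    apply: Iun => n; have [[x0 Fx0]|nF] := EM (exists x, F n x).
      apply: Imono (Isg x0) => x Fx /=; apply: fi => //; first exact: Fx.1.
        exact: Fx0.1.
      by rewrite Fx.2 Fx0.2.
    by apply: Imono I0 => x Fx; apply: nF; exists x.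
  by apply: Imono => x Xx; exists (f x) => //.
set Q := (ratr @` [set: rat] : set R).
have sQ : small Q.
  by move=> cQ; apply: sX; apply: cle_trans cQ (cle_trans nat_rat nX).
pose Y := [set y | exists q, translate X (ratr q) y].
have sY : small Y.
  apply: (small_sub _ (small_prod (g := fun p : R * R => p.1 + p.2) nX sX sX sQ)).
  move=> y [q [x Xx <-]]; exists (x, ratr q) => //; split => //.
  by exists q.
have key A : Borel A -> ~ I A -> ~ I (Y `&` A).
  move=> BA nIA.
  pose U := [set y | exists q, translate A (ratr q) y].
  have BU : Borel U.
    rewrite /U rat_union; apply: sigma_algebra_bigcup => n.
    case: (unpickle n) => [q|]; last exact: sigma_algebra0.
    exact: Borel_translate.
  have AU : A `<=` U by move=> a Aa; exists 0; exists a => //; rewrite rmorph0 addr0.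
  have IE : I (~` U).
    case: (EM (I (~` U))) => // nIE; exfalso.
    have BE : Borel (~` U) by rewrite -setTD; exact: sigma_algebraCD.
    have [V [oV V0 VUE]] := Ist U (~` U) BU BE (fun IU => nIA (Imono _ _ AU IU)) nIE.
    have [z [Vz [r _ rz]]] := dense_rat V0 oV.
    have [u [q [a Aa <-]] [w nUw ew]] := VUE z Vz.
    apply: nUw; exists (q - r); exists a => //.
    by rewrite ratrB rz -ew; ring.
  have [q nIq] : exists q, ~ I (X `&` translate A (ratr q)).
    apply: contra_notP nIX => H.
    have : I (~` U `|` [set x | exists q, (X `&` translate A (ratr q)) x]).
      apply: Iunion2; first exact: IE.
      apply: Irat => q0; apply: contra_notP H => nI.
      by exists q0.
    apply: Imono => x Xx; have [Ux|nUx] := EM (U x); last by left.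
    by right; case: Ux => q Tq; exists q.
  move=> IYA; apply: nIq; have := Itr _ (ratr q) IYA; apply: Imono.
  move=> x [Xx [a Aa ex]]; exists a => //; split => //.
  exists (- q); exists x => //; rewrite rmorphN -ex; ring.
have [t nt] := small_ne (small_prod (g := fun p : R * R => p.1 - p.2) nX sX sY sY).
pose D := translate Y t.
exists (~` D); split.
  move=> B [_ sB0]; have sB : small B by move=> /cle_card.
  have sD : small D.
    by apply: (small_sub _ (small_image (f := fun y => y + t) sY)) => z [y Yy <-]; exists y.
  have [x nx] := small_ne (small_prod (g := fun p : R * R => p.1 - p.2) nX sX sD sB).
  exists x => z [b Bb <-] Dz; apply: nx; exists (b + x, b); first by split.
  by rewrite /=; ring.
move=> A BA nIA; split.
  move=> IAC; apply: (key A BA nIA); apply: Imono IAC => y [Yy Ay]; split => //.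
  move=> [y' Yy' ey]; apply: nt; exists (y, y') => //=.
  by rewrite -ey; ring.
have BA' : Borel (translate A (- t)) by exact: Borel_translate.
have nIA' : ~ I (translate A (- t)).
  move=> IA'; apply: nIA; have := Itr _ t IA'; apply: Imono => a Aa.
  by exists (a - t); [exists a|ring].
move=> IAD; apply: (key _ BA' nIA'); have := Itr _ (- t) IAD; apply: Imono.
move=> y [Yy [a Aa ey]]; exists a; last by rewrite ey.
split => //; rewrite /D => /(_ _) nD; apply: nD; exists y => //.
by rewrite -ey; ring.
Qed.

End Main.

Theorem mainTheorem8 (R : realType) (I : set (set R)) :
  sigma_ideal I -> proper_sigma_ideal I -> translation_invariant I ->
  contains_singletons I -> has_Borel_base I -> Steinhaus I -> non_lt_c I ->
  exists C : set R, lt_c_covering C /\ completely_nonmeasurable I C.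
Proof. exact: (@main_proof R I). Qed.
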